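(* Let $E_1\subset\mathbb{R}^n$ be a closed Euclidean ball with center $c$ and radius $R>0$, and let $\mathcal{Y}_*\subset E_1$ be a convex set containing a Euclidean ball $\{y:\|y-y_*\|_2\leq\rho_*\}$ of radius $\rho_*>0$. Consider an oracle which, when queried at a point $y\in\mathbb{R}^n$, either returns nothing (''gets stuck'') or returns an affine function $f:\mathbb{R}^n\to\mathbb{R}$ with $\|\nabla f\|_2=1$, $f(y)\geq 0$ and $f(z)\leq 0$ for all $z\in\mathcal{Y}_*$ (a ''separator''). The Bundle-Level (BL) algorithm queries the oracle at points $y^1,y^2,\dots$ defined as follows: $y^1=c$; if at steps $1,\dots,s-1$ the oracle returned separators $f_1,\dots,f_{s-1}$, set $f^{s-1}(y)=\max_{r<s}f_r(y)$, $\Delta_{s-1}=\min_{y\in E_1}f^{s-1}(y)$, and $$y^s=\mathrm{argmin}_y\Big\{\|y^{s-1}-y\|_2:\ y\in E_1,\ f^{s-1}(y)\leq \tfrac12\Delta_{s-1}\Big\};$$ the algorithm terminates at the first step at which the oracle returns nothing. Then for every $s\geq 1$ such that the oracle returned separators at steps $1,\dots,s$, one has $\Delta_s\leq-\rho_*$ (in particular all points $y^s$ are well defined). Moreover, if the oracle returned separators at each of the steps $1,\dots,S$, then $S\leq 32R^2/\rho_*^2$; hence BL terminates after at most $32R^2/\rho_*^2+1$ steps. *)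

(* Defs.v *)
From Stdlib Require Vectors.Fin.
From Stdlib Require Import Reals Lra.
Open Scope R_scope.

Definition vec (n : nat) := Fin.t n -> R.

Fixpoint vsum (n : nat) : (Fin.t n -> R) -> R :=
  match n with
  | O => fun _ => 0
  | S m => fun f => f Fin.F1 + vsum m (fun i => f (Fin.FS i))
  end.

Definition dot {n} (u v : vec n) : R := vsum n (fun i => u i * v i).
Definition norm2 {n} (u : vec n) : R := sqrt (dot u u).
Definition vsub {n} (u v : vec n) : vec n := fun i => u i - v i.
Definition dist {n} (u v : vec n) : R := norm2 (vsub u v).

Definition cball {n} (c : vec n) (r : R) (y : vec n) : Prop := dist y c <= r.

Definition convex {n} (C : vec n -> Prop) : Prop :=
  forall x y (t : R), C x -> C y -> 0 <= t <= 1 ->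
    C (fun i => t * x i + (1 - t) * y i).

(* affine function f(y) = <g, y> + b ; its gradient is g *)
Definition aff {n} (g : vec n) (b : R) (y : vec n) : R := dot g y + b.

Definition separator {n} (Ys : vec n -> Prop) (y g : vec n) (b : R) : Prop :=
  norm2 g = 1 /\ aff g b y >= 0 /\ (forall z, Ys z -> aff g b z <= 0).

(* f^s(y) = max_{1 <= r <= s} f_r(y)   (meaningful for s >= 1) *)
Fixpoint fmax {n} (g : nat -> vec n) (b : nat -> R) (s : nat) (y : vec n) : R :=
  match s with
  | O => aff (g 1%nat) (b 1%nat) y
  | S O => aff (g 1%nat) (b 1%nat) y
  | S s' => Rmax (fmax g b s' y) (aff (g s) (b s) y)
  end.

Definition is_min_val {n} (E : vec n -> Prop) (F : vec n -> R) (d : R) : Prop :=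
  (exists y, E y /\ F y = d) /\ (forall y, E y -> d <= F y).

Definition is_closest {n} (C : vec n -> Prop) (q p : vec n) : Prop :=
  C p /\ (forall z, C z -> dist q p <= dist q z).

Definition level_set {n} (c : vec n) (Rad : R) (F : vec n -> R) (d : R) (y : vec n) : Prop :=
  cball c Rad y /\ F y <= d / 2.

Definition BL_step {n} (c : vec n) (Rad : R) (F : vec n -> R) (yprev ynew : vec n) : Prop :=
  exists d, is_min_val (cball c Rad) F d /\ is_closest (level_set c Rad F d) yprev ynew.

(* A run of BL in which the oracle returned separators (g s, b s) at steps 1..S
   (the oracle may be arbitrary, even adaptive: only its answers matter). *)
Definition BL_run {n} (c : vec n) (Rad : R) (Ys : vec n -> Prop)
  (y g : nat -> vec n) (b : nat -> R) (S : nat) : Prop :=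
  y 1%nat = c /\
  (forall s, (1 <= s <= S)%nat -> separator Ys (y s) (g s) (b s)) /\
  (forall s, (2 <= s <= S)%nat -> BL_step c Rad (fmax g b (s - 1)) (y (s - 1)%nat) (y s)).

(* Main.v *)
From Stdlib Require Import Reals Lra Lia Psatz.
From Stdlib Require Import FunctionalExtensionality ClassicalEpsilon Classical.
Require Import Defs.
Open Scope R_scope.

Lemma vsum_ext n (f h : Fin.t n -> R) : (forall i, f i = h i) -> vsum n f = vsum n h.
Proof. revert f h; induction n; simpl; intros f h H; [reflexivity|].
  rewrite H; f_equal; apply IHn; intros; apply H. Qed.

Lemma vsum_eq3 n (F f g h : Fin.t n -> R) a b c :
  (forall i, F i = a * f i + b * g i + c * h i) ->
  vsum n F = a * vsum n f + b * vsum n g + c * vsum n h.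
Proof. revert F f g h; induction n; simpl; intros F f g h H; [ring|].
  rewrite H, (IHn (fun i => F (Fin.FS i)) (fun i => f (Fin.FS i))
    (fun i => g (Fin.FS i)) (fun i => h (Fin.FS i))); [ring| intros; apply H]. Qed.

Lemma vsum_le n (f h : Fin.t n -> R) : (forall i, f i <= h i) -> vsum n f <= vsum n h.
Proof. revert f h; induction n; simpl; intros f h H; [lra|].
  pose proof (H Fin.F1); pose proof (IHn (fun i => f (Fin.FS i)) (fun i => h (Fin.FS i)) (fun i => H _)); lra. Qed.

Lemma vsum_const n a : vsum n (fun _ => a) = INR n * a.
Proof. induction n; simpl vsum; [simpl; ring|]. rewrite IHn, S_INR; ring. Qed.

Lemma vsum_nonneg n (f : Fin.t n -> R) : (forall i, 0 <= f i) -> 0 <= vsum n f.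
Proof. intros H. pose proof (vsum_le n (fun _ => 0) f H). rewrite vsum_const in H0. lra. Qed.

Lemma vsum_ge_coord n (f : Fin.t n -> R) i : (forall j, 0 <= f j) -> f i <= vsum n f.
Proof. revert f; induction i; intros f H; simpl.
  - pose proof (vsum_nonneg n (fun j => f (Fin.FS j)) (fun j => H _)); lra.
  - pose proof (IHi (fun j => f (Fin.FS j)) (fun j => H _)); pose proof (H Fin.F1); simpl in *; lra. Qed.

Definition nsq {n} (u : vec n) := dot u u.

Lemma nsq_nonneg {n} (u : vec n) : 0 <= nsq u.
Proof. apply vsum_nonneg; intros; nra. Qed.

Lemma nsq_coord {n} (u : vec n) i : u i * u i <= nsq u.
Proof. apply (vsum_ge_coord n (fun i => u i * u i)); intros; nra. Qed.

Lemma norm2_sq {n} (u : vec n) : norm2 u * norm2 u = nsq u.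
Proof. apply sqrt_sqrt, nsq_nonneg. Qed.

Lemma norm2_nonneg {n} (u : vec n) : 0 <= norm2 u.
Proof. apply sqrt_pos. Qed.

Lemma norm2_ext {n} (u v : vec n) : (forall i, u i = v i) -> norm2 u = norm2 v.
Proof. intros H; unfold norm2, dot; f_equal; apply vsum_ext; intros; rewrite H; ring. Qed.

Lemma sqrt_le_of_sq x y : 0 <= y -> x <= y * y -> sqrt x <= y.
Proof. intros Hy H. rewrite <- (sqrt_square y Hy). apply sqrt_le_1_alt; lra. Qed.

Lemma sq_of_sqrt_le x y : 0 <= x -> sqrt x <= y -> x <= y * y.
Proof. intros Hx H. rewrite <- (sqrt_sqrt x Hx). pose proof (sqrt_pos x). nra. Qed.

Lemma quad_disc A B C : 0 <= A -> 0 <= C -> (forall t, 0 <= A - 2 * t * B + t * t * C) -> B * B <= A * C.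
Proof. intros HA HC H. destruct (Req_dec C 0) as [H0|H0].
  - subst. destruct (Req_dec B 0) as [HB|HB]; [subst; lra|].
    specialize (H ((A + 1) / (2 * B))).
    replace (A - 2 * ((A + 1) / (2 * B)) * B + (A + 1) / (2 * B) * ((A + 1) / (2 * B)) * 0) with (-1) in H by (field; auto). lra.
  - specialize (H (B / C)).
    replace (A - 2 * (B / C) * B + B / C * (B / C) * C) with ((A * C - B * B) / C) in H by (field; auto).
    assert (0 < C) by lra.
    assert (0 <= A * C - B * B); [|lra].
    replace (A * C - B * B) with ((A * C - B * B) / C * C) by (field; auto). nra. Qed.

Lemma cauchy_schwarz {n} (u v : vec n) : dot u v <= norm2 u * norm2 v.
Proof.
  assert (Hq : forall t, 0 <= nsq u - 2 * t * dot u v + t * t * nsq v).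
  { intros t. pose proof (nsq_nonneg (fun i => u i - t * v i)).
    unfold nsq, dot in *.
    rewrite (vsum_eq3 n _ (fun i => u i * u i) (fun i => u i * v i) (fun i => v i * v i) 1 (-2 * t) (t * t)) in H by (intros; ring). lra. }
  pose proof (quad_disc _ _ _ (nsq_nonneg u) (nsq_nonneg v) Hq).
  destruct (Rle_dec (dot u v) 0). { pose proof (norm2_nonneg u); pose proof (norm2_nonneg v); nra. }
  unfold norm2. rewrite <- sqrt_mult_alt by apply nsq_nonneg.
  rewrite <- (sqrt_square (dot u v)) by lra. apply sqrt_le_1_alt. exact H. Qed.

Lemma norm2_triangle {n} (u v : vec n) : norm2 (fun i => u i + v i) <= norm2 u + norm2 v.
Proof. apply sqrt_le_of_sq. { pose proof (norm2_nonneg u); pose proof (norm2_nonneg v); lra. }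
  pose proof (cauchy_schwarz u v). pose proof (norm2_sq u); pose proof (norm2_sq v).
  unfold nsq, dot in *.
  rewrite (vsum_eq3 n _ (fun i => u i * u i) (fun i => u i * v i) (fun i => v i * v i) 1 2 1) by (intros; ring).
  nra. Qed.


Lemma dist_sym {n} (u v : vec n) : dist u v = dist v u.
Proof. unfold dist, norm2, dot, vsub; f_equal; apply vsum_ext; intros; ring. Qed.

Lemma dist_nonneg {n} (u v : vec n) : 0 <= dist u v.
Proof. apply sqrt_pos. Qed.

Lemma dist_sq {n} (u v : vec n) : dist u v * dist u v = nsq (vsub u v).
Proof. apply norm2_sq. Qed.

Lemma dist_self {n} (u : vec n) : dist u u = 0.
Proof. unfold dist, norm2, dot, vsub.
  rewrite (vsum_ext n _ (fun _ => 0)) by (intros; ring). rewrite vsum_const, Rmult_0_r. apply sqrt_0. Qed.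

Lemma dist_triangle {n} (x y z : vec n) : dist x z <= dist x y + dist y z.
Proof. unfold dist. rewrite (norm2_ext (vsub x z) (fun i => vsub x y i + vsub y z i)) by (intros; unfold vsub; ring).
  apply norm2_triangle. Qed.

Lemma norm2_scale {n} (u : vec n) t : 0 <= t -> norm2 (fun i => t * u i) = t * norm2 u.
Proof. intros Ht. unfold norm2, dot.
  rewrite (vsum_eq3 n _ (fun i => u i * u i) (fun i => u i * u i) (fun i => u i * u i) (t * t) 0 0) by (intros; ring).
  replace (t * t * vsum n (fun i => u i * u i) + 0 * vsum n (fun i => u i * u i) + 0 * vsum n (fun i => u i * u i))
    with ((t * t) * vsum n (fun i => u i * u i)) by ring.
  rewrite sqrt_mult_alt by nra. rewrite sqrt_square by lra. reflexivity. Qed.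

Definition cc {n} (t : R) (x y : vec n) : vec n := fun i => t * x i + (1 - t) * y i.

Lemma dist_cc {n} (x y c : vec n) t : 0 <= t <= 1 -> dist (cc t x y) c <= t * dist x c + (1 - t) * dist y c.
Proof. intros Ht. unfold dist.
  rewrite (norm2_ext (vsub (cc t x y) c) (fun i => (fun i => t * vsub x c i) i + (fun i => (1 - t) * vsub y c i) i))
    by (intros; unfold vsub, cc; ring).
  eapply Rle_trans; [apply norm2_triangle|]. rewrite !norm2_scale by lra. lra. Qed.

Lemma lim_le a b : (forall eta, 0 < eta -> a <= b + eta) -> a <= b.
Proof. intros H. destruct (Rle_dec a b); auto. specialize (H ((a - b) / 2)). lra. Qed.

Lemma aff_diff {n} (g x y : vec n) b : aff g b x - aff g b y = dot g (vsub x y).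
Proof. unfold aff, dot, vsub.
  rewrite (vsum_eq3 n (fun i => g i * (x i - y i)) (fun i => g i * x i) (fun i => g i * y i) (fun i => g i * y i) 1 (-1) 0) by (intros; ring).
  ring. Qed.

Lemma aff_lip {n} (g x y : vec n) b : norm2 g = 1 -> aff g b x <= aff g b y + dist x y.
Proof. intros Hg. pose proof (aff_diff g x y b). pose proof (cauchy_schwarz g (vsub x y)).
  unfold dist. rewrite Hg in H0. lra. Qed.

Lemma aff_cc {n} (g x y : vec n) b t : aff g b (cc t x y) = t * aff g b x + (1 - t) * aff g b y.
Proof. unfold aff, dot, cc.
  rewrite (vsum_eq3 n _ (fun i => g i * x i) (fun i => g i * y i) (fun i => g i * y i) t (1 - t) 0) by (intros; ring).
  ring. Qed.

Lemma aff_ball {n} (g ys : vec n) b rho : 0 < rho -> norm2 g = 1 ->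
  (forall z, cball ys rho z -> aff g b z <= 0) -> aff g b ys <= - rho.
Proof. intros Hr Hg H. set (z := fun i => ys i + rho * g i).
  assert (Hz : cball ys rho z).
  { unfold cball, dist. rewrite (norm2_ext (vsub z ys) (fun i => rho * g i)) by (intros; unfold vsub, z; ring).
    rewrite norm2_scale by lra. rewrite Hg. lra. }
  specialize (H z Hz). pose proof (aff_diff g z ys b).
  assert (dot g (vsub z ys) = rho * nsq g).
  { unfold dot, nsq, vsub, z.
    rewrite (vsum_eq3 n _ (fun i => g i * g i) (fun i => g i * g i) (fun i => g i * g i) rho 0 0) by (intros; ring). unfold dot. ring. }
  rewrite <- norm2_sq, Hg in H1. lra. Qed.

Section FM.
Context {n : nat} (g : nat -> vec n) (b : nat -> R).

Lemma fmax_S s y : fmax g b (S s) y = Rmax (fmax g b s y) (aff (g (S s)) (b (S s)) y).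
Proof. destruct s; [|reflexivity]. simpl fmax. unfold Rmax; destruct Rle_dec; reflexivity. Qed.

Lemma fmax_0 y : fmax g b 0 y = aff (g 1%nat) (b 1%nat) y.
Proof. reflexivity. Qed.

Lemma fmax_mono s s' y : (s <= s')%nat -> fmax g b s y <= fmax g b s' y.
Proof. induction 1; [lra|]. rewrite fmax_S. pose proof (Rmax_l (fmax g b m y) (aff (g (S m)) (b (S m)) y)). lra. Qed.

Lemma aff_le_fmax r s y : (1 <= r <= s)%nat -> aff (g r) (b r) y <= fmax g b s y.
Proof. induction s; intros H; [lia|]. rewrite fmax_S.
  destruct (Nat.eq_dec r (S s)) as [->|Hne]; [apply Rmax_r|].
  eapply Rle_trans; [apply IHs; lia| apply Rmax_l]. Qed.

Lemma fmax_le s y v : (1 <= s)%nat -> (forall r, (1 <= r <= s)%nat -> aff (g r) (b r) y <= v) -> fmax g b s y <= v.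
Proof. induction s; intros Hs H; [lia|]. rewrite fmax_S. apply Rmax_lub; [|apply H; lia].
  destruct s; [rewrite fmax_0; apply H; lia|]. apply IHs; [lia|]. intros; apply H; lia. Qed.

Lemma fmax_convex s x y t : 0 <= t <= 1 -> fmax g b s (cc t x y) <= t * fmax g b s x + (1 - t) * fmax g b s y.
Proof. intros Ht. induction s.
  - rewrite !fmax_0, aff_cc; lra.
  - rewrite !fmax_S, aff_cc.
    pose proof (Rmax_l (fmax g b s x) (aff (g (S s)) (b (S s)) x)).
    pose proof (Rmax_r (fmax g b s x) (aff (g (S s)) (b (S s)) x)).
    pose proof (Rmax_l (fmax g b s y) (aff (g (S s)) (b (S s)) y)).
    pose proof (Rmax_r (fmax g b s y) (aff (g (S s)) (b (S s)) y)).
    apply Rmax_lub; nra. Qed.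

Lemma fmax_lip s x y : (1 <= s)%nat -> (forall r, (1 <= r <= s)%nat -> norm2 (g r) = 1) ->
  fmax g b s x <= fmax g b s y + dist x y.
Proof. intros Hs Hg. apply fmax_le; auto. intros r Hr.
  pose proof (aff_lip (g r) x y (b r) (Hg r Hr)). pose proof (aff_le_fmax r s y Hr). lra. Qed.
End FM.

Lemma sup_ex (P : R -> Prop) B : (exists x, P x) -> (forall x, P x -> x <= B) ->
  exists L, (forall x, P x -> x <= L) /\ (forall eps, 0 < eps -> exists x, P x /\ L - eps < x).
Proof. intros Hne Hb. destruct (completeness P) as [L [HL1 HL2]]; [exists B; exact Hb|exact Hne|].
  exists L; split; [exact HL1|]. intros eps He.
  destruct (classic (exists x, P x /\ L - eps < x)) as [H|H]; [exact H|].
  exfalso. assert (L <= L - eps); [|lra]. apply HL2. intros x Hx.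
  destruct (Rle_dec x (L - eps)); auto. exfalso; apply H; exists x; split; auto; lra. Qed.

Lemma inf_ex (P : R -> Prop) B : (exists x, P x) -> (forall x, P x -> B <= x) ->
  exists m, (forall x, P x -> m <= x) /\ (forall eps, 0 < eps -> exists x, P x /\ x < m + eps).
Proof. intros [x0 Hx0] Hb. destruct (sup_ex (fun x => P (- x)) (- B)) as [L [H1 H2]].
  - exists (- x0). rewrite Ropp_involutive; auto.
  - intros x Hx. specialize (Hb _ Hx). lra.
  - exists (- L); split.
    + intros x Hx. assert (- x <= L); [apply H1; rewrite Ropp_involutive; auto|lra].
    + intros eps He. destruct (H2 eps He) as [x [Hx Hx']]. exists (- x); split; auto; lra. Qed.

Lemma eps_seq a : 0 < a -> exists N, forall k, (N <= k)%nat -> 1 / (INR k + 1) <= a.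
Proof. intros Ha. destruct (archimed_cor1 a Ha) as [N [HN HN0]]. exists N. intros k Hk.
  assert (INR N <= INR k) by (apply le_INR; lia). assert (0 < INR N) by (apply lt_0_INR; lia).
  assert (/ (INR k + 1) <= / INR N) by (apply Rinv_le_contravar; lra).
  unfold Rdiv; rewrite Rmult_1_l; lra. Qed.

Lemma eps_seq_C C a : 0 <= C -> 0 < a -> exists N, forall k, (N <= k)%nat -> C / (INR k + 1) <= a.
Proof. intros HC Ha. destruct (eps_seq (a / (C + 1))) as [N HN]. { apply Rdiv_lt_0_compat; lra. }
  exists N; intros k Hk. specialize (HN k Hk).
  assert (0 < INR k + 1) by (pose proof (pos_INR k); lra).
  assert (0 <= 1 / (INR k + 1)) by (apply Rlt_le, Rdiv_lt_0_compat; lra).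
  replace (C / (INR k + 1)) with (C * (1 / (INR k + 1))) by (field; lra).
  assert ((C + 1) * (1 / (INR k + 1)) <= a).
  { replace a with ((C + 1) * (a / (C + 1))) by (field; lra). apply Rmult_le_compat_l; lra. }
  nra. Qed.

Definition closedS {n} (C : vec n -> Prop) :=
  forall x, (forall eta, 0 < eta -> exists u, C u /\ dist u x <= eta) -> C x.

Lemma level_closed {n} (c : vec n) Rad (F : vec n -> R) v :
  (forall x y, F x <= F y + dist x y) ->
  closedS (fun z => cball c Rad z /\ F z <= v).
Proof. intros HF x Hx. split.
  - unfold cball. apply lim_le. intros eta He. destruct (Hx eta He) as [u [[Hu _] Hd]].
    pose proof (dist_triangle x u c). rewrite dist_sym in Hd. unfold cball in Hu. lra.
  - apply lim_le. intros eta He. destruct (Hx eta He) as [u [[_ Hu] Hd]].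
    pose proof (HF x u). rewrite dist_sym in Hd. lra. Qed.

Lemma dist_le_nsq {n} (q p z : vec n) : dist q p <= dist q z -> nsq (vsub q p) <= nsq (vsub q z).
Proof. intros H. rewrite <- !dist_sq. pose proof (dist_nonneg q p). nra. Qed.

Lemma proj_ineq {n} (C : vec n -> Prop) q p x : convex C -> is_closest C q p -> C x ->
  nsq (vsub q p) + nsq (vsub p x) <= nsq (vsub q x).
Proof. intros Hc [Hp Hmin] Hx.
  set (U := nsq (vsub q p)). set (D := dot (vsub q p) (vsub x p)). set (E := nsq (vsub x p)).
  assert (Hexp : forall t, nsq (vsub q (cc t x p)) = U - 2 * t * D + t * t * E).
  { intros t. unfold U, D, E, nsq, dot, vsub, cc.
    rewrite (vsum_eq3 n _ (fun i => (q i - p i) * (q i - p i)) (fun i => (q i - p i) * (x i - p i)) (fun i => (x i - p i) * (x i - p i)) 1 (-2 * t) (t * t))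
      by (intros; ring). ring. }
  assert (HE : 0 <= E) by apply nsq_nonneg.
  assert (HD : D <= 0).
  { destruct (Rle_dec D 0) as [|HD]; auto. exfalso.
    set (t := D / (D + E)).
    assert (Ht : t * (D + E) = D) by (unfold t; field; lra).
    assert (Ht0 : 0 < t) by (unfold t; apply Rdiv_lt_0_compat; lra).
    assert (Ht1 : t <= 1) by (unfold t; apply Rmult_le_reg_r with (D + E); [lra|]; unfold Rdiv; rewrite Rmult_assoc, Rinv_l by lra; lra).
    assert (Hz : C (cc t x p)) by (apply Hc; auto; lra).
    pose proof (dist_le_nsq _ _ _ (Hmin _ Hz)). rewrite Hexp in H. fold U in H.
    assert (0 <= t * (- 2 * D + t * E)) by nra.
    assert (0 <= - 2 * D + t * E) by nra. nra. }
  assert (H1 : nsq (vsub q x) = U - 2 * D + E).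
  { replace (U - 2 * D + E) with (U - 2 * 1 * D + 1 * 1 * E) by ring. rewrite <- (Hexp 1). unfold nsq, dot, vsub, cc. apply vsum_ext; intros; ring. }
  assert (H2 : nsq (vsub p x) = E).
  { unfold E, nsq, dot, vsub. apply vsum_ext; intros; ring. }
  rewrite H1, H2. lra. Qed.

Lemma abs_le_sqrt x e : x * x <= e -> Rabs x <= sqrt e.
Proof. intros H. rewrite <- sqrt_Rsqr_abs. apply sqrt_le_1_alt. unfold Rsqr; lra. Qed.

Lemma sq_le_of_abs x e : 0 <= e -> Rabs x <= sqrt e -> x * x <= e.
Proof. intros He H. rewrite <- (sqrt_sqrt e He). pose proof (Rabs_pos x).
  assert (x * x = Rabs x * Rabs x) by (destruct (Rcase_abs x); [rewrite Rabs_left|rewrite Rabs_right]; lra || nra).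
  nra. Qed.

Lemma completeness_vec {n} (z : nat -> vec n) (e : nat -> R) :
  (forall k, 0 <= e k) -> (forall a, 0 < a -> exists N, forall k, (N <= k)%nat -> e k <= a) ->
  (forall k l, (k <= l)%nat -> nsq (vsub (z k) (z l)) <= e k) ->
  exists p, forall eta, 0 < eta -> exists N, forall k, (N <= k)%nat -> dist (z k) p <= eta.
Proof. intros He0 He Hz.
  assert (Hco : forall k l i, (k <= l)%nat -> Rabs (z k i - z l i) <= sqrt (e k)).
  { intros k l i Hkl. apply abs_le_sqrt. eapply Rle_trans; [|apply (Hz k l Hkl)].
    apply (nsq_coord (vsub (z k) (z l)) i). }
  assert (Hc : forall i, Cauchy_crit (fun k => z k i)).
  { intros i eps Heps. destruct (He ((eps / 2) * (eps / 2))) as [N HN]; [nra|].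
    exists N. intros a b Ha Hb. unfold Rdist.
    assert (Hs : forall k, (N <= k)%nat -> sqrt (e k) <= eps / 2).
    { intros k Hk. apply sqrt_le_of_sq; [lra|]. apply HN; lia. }
    destruct (Compare_dec.le_ge_dec a b) as [Hab|Hab].
    - pose proof (Hco a b i Hab). pose proof (Hs a Ha). lra.
    - pose proof (Hco b a i Hab). pose proof (Hs b Hb). rewrite Rabs_minus_sym. lra. }
  set (p := fun i => proj1_sig (R_complete _ (Hc i))).
  assert (Hp : forall k i, Rabs (z k i - p i) <= sqrt (e k)).
  { intros k i. apply lim_le. intros eta Heta.
    destruct (proj2_sig (R_complete _ (Hc i)) eta Heta) as [N HN].
    specialize (HN (max N k) ltac:(lia)). unfold Rdist in HN. change (proj1_sig (R_complete (fun k => z k i) (Hc i))) with (p i) in HN.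
    pose proof (Hco k (max N k) i ltac:(lia)).
    replace (z k i - p i) with ((z k i - z (max N k) i) + (z (max N k) i - p i)) by ring.
    pose proof (Rabs_triang (z k i - z (max N k) i) (z (max N k) i - p i)). lra. }
  exists p. intros eta Heta.
  destruct (He (eta * eta / (INR n + 1))) as [N HN].
  { apply Rdiv_lt_0_compat; [nra|]. pose proof (pos_INR n); lra. }
  exists N. intros k Hk. apply sqrt_le_of_sq; [lra|].
  assert (nsq (vsub (z k) p) <= INR n * e k).
  { rewrite <- vsum_const. apply vsum_le. intros i. unfold vsub. apply sq_le_of_abs; auto. }
  specialize (HN k Hk). pose proof (pos_INR n).
  assert (INR n * e k <= INR n * (eta * eta / (INR n + 1))) by (apply Rmult_le_compat_l; auto).
  assert (INR n * (eta * eta / (INR n + 1)) <= eta * eta).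
  { replace (INR n * (eta * eta / (INR n + 1))) with (eta * eta * (INR n / (INR n + 1))) by (field; lra).
    assert (INR n / (INR n + 1) <= 1).
    { apply Rmult_le_reg_r with (INR n + 1); [lra|]. unfold Rdiv; rewrite Rmult_assoc, Rinv_l by lra. lra. }
    nra. }
  unfold nsq in H. lra. Qed.

Lemma closest_ex {n} (C : vec n -> Prop) (q : vec n) :
  convex C -> closedS C -> (exists z, C z) -> exists p, is_closest C q p.
Proof. intros Hcv Hcl [z0 Hz0].
  destruct (inf_ex (fun v => exists z, C z /\ v = dist q z) 0) as [m [Hm1 Hm2]].
  { exists (dist q z0); eauto. }
  { intros v [z [_ ->]]; apply dist_nonneg. }
  assert (Hm0 : 0 <= m).
  { apply lim_le; intros eta He. destruct (Hm2 eta He) as [v [[z [_ ->]] Hv]]. pose proof (dist_nonneg q z). lra. }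
  assert (Hk : forall k : nat, exists z, C z /\ dist q z <= m + 1 / (INR k + 1)).
  { intros k. assert (0 < 1 / (INR k + 1)) by (apply Rdiv_lt_0_compat; [lra|pose proof (pos_INR k); lra]).
    destruct (Hm2 _ H) as [v [[z [Hz ->]] Hv]]. exists z; split; auto; lra. }
  set (zs := fun k => proj1_sig (constructive_indefinite_description _ (Hk k))).
  assert (Hzs : forall k, C (zs k) /\ dist q (zs k) <= m + 1 / (INR k + 1)).
  { intros k. exact (proj2_sig (constructive_indefinite_description _ (Hk k))). }
  assert (Heps : forall k l, (k <= l)%nat -> 1 / (INR l + 1) <= 1 / (INR k + 1) <= 1 /\ 0 < 1 / (INR l + 1)).
  { intros k l Hkl. assert (INR k <= INR l) by (apply le_INR; auto). pose proof (pos_INR k).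
    unfold Rdiv; rewrite !Rmult_1_l. repeat split.
    - apply Rinv_le_contravar; lra.
    - rewrite <- Rinv_1. apply Rinv_le_contravar; lra.
    - apply Rinv_0_lt_compat; lra. }
  destruct (completeness_vec zs (fun k => (8 * m + 4) / (INR k + 1))) as [p Hp].
  - intros k. apply Rmult_le_pos; [lra|]. apply Rlt_le, Rinv_0_lt_compat. pose proof (pos_INR k); lra.
  - intros a Ha. apply eps_seq_C; lra.
  - intros k l Hkl. destruct (Hzs k) as [Ck Dk]. destruct (Hzs l) as [Cl Dl].
    assert (Cmid : C (cc (1/2) (zs k) (zs l))) by (apply Hcv; auto; split; lra).
    assert (Hmid : m <= dist q (cc (1/2) (zs k) (zs l))) by (apply Hm1; eauto).
    assert (Hpar : nsq (vsub (zs k) (zs l)) = 2 * nsq (vsub q (zs k)) + 2 * nsq (vsub q (zs l)) + (-4) * nsq (vsub q (cc (1/2) (zs k) (zs l)))).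
    { unfold nsq, dot, vsub, cc. apply vsum_eq3. intros; field. }
    rewrite Hpar. rewrite <- !dist_sq.
    destruct (Heps k l Hkl) as [[E1 E2] E3].
    set (ek := 1 / (INR k + 1)) in *. set (el := 1 / (INR l + 1)) in *.
    pose proof (dist_nonneg q (zs k)). pose proof (dist_nonneg q (zs l)).
    replace ((8 * m + 4) / (INR k + 1)) with ((8 * m + 4) * ek) by (unfold ek; field; pose proof (pos_INR k); lra).
    nra.
  - exists p. assert (Cp : C p).
    { apply Hcl. intros eta He. destruct (Hp eta He) as [N HN]. exists (zs N). split; [apply Hzs|apply HN; lia]. }
    split; auto. intros z Hz. assert (dist q p <= m); [|pose proof (Hm1 _ (ex_intro _ z (conj Hz eq_refl))); lra].
    apply lim_le; intros eta He. destruct (Hp (eta / 2) ltac:(lra)) as [N1 HN1].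
    destruct (eps_seq (eta / 2) ltac:(lra)) as [N2 HN2].
    set (k := max N1 N2). specialize (HN1 k ltac:(lia)). specialize (HN2 k ltac:(lia)).
    destruct (Hzs k) as [_ Dk]. pose proof (dist_triangle q (zs k) p). lra. Qed.

Lemma closest_unique {n} (C : vec n -> Prop) q p p' : convex C -> is_closest C q p -> is_closest C q p' -> p = p'.
Proof. intros Hc H1 H2. pose proof (proj_ineq C q p p' Hc H1 (proj1 H2)).
  pose proof (dist_le_nsq _ _ _ (proj2 H2 p (proj1 H1))).
  assert (H3 : nsq (vsub p p') <= 0) by lra.
  apply functional_extensionality. intros i. pose proof (nsq_coord (vsub p p') i) as Hi. change (vsub p p' i) with (p i - p' i) in Hi.
  assert ((p i - p' i) * (p i - p' i) <= 0) by lra.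
  apply Rminus_diag_uniq, Rsqr_0_uniq. unfold Rsqr. apply Rle_antisym; [lra| apply (Rle_0_sqr (p i - p' i))]. Qed.

Lemma level_convex {n} (c : vec n) Rad (F : vec n -> R) v :
  (forall x y t, 0 <= t <= 1 -> F (cc t x y) <= t * F x + (1 - t) * F y) ->
  convex (fun z => cball c Rad z /\ F z <= v).
Proof. intros HF x y t [Bx Fx] [By Fy] Ht. change (fun i => t * x i + (1 - t) * y i) with (cc t x y).
  unfold cball in *. split.
  - pose proof (dist_cc x y c t Ht). nra.
  - pose proof (HF x y t Ht). nra. Qed.

Lemma min_ex {n} (c : vec n) Rad (F : vec n -> R) : 0 < Rad ->
  (forall x y, F x <= F y + dist x y) ->
  (forall x y t, 0 <= t <= 1 -> F (cc t x y) <= t * F x + (1 - t) * F y) ->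
  exists d, is_min_val (cball c Rad) F d.
Proof. intros HR HL HC.
  destruct (inf_ex (fun v => exists z, cball c Rad z /\ v = F z) (F c - Rad)) as [m [Hm1 Hm2]].
  { exists (F c); exists c; split; auto. unfold cball; rewrite dist_self; lra. }
  { intros v [z [Hz ->]]. pose proof (HL c z). rewrite dist_sym in H. unfold cball in Hz. lra. }
  set (K := fun (k : nat) z => cball c Rad z /\ F z <= m + 1 / (INR k + 1)).
  assert (Hpos : forall k, 0 < 1 / (INR k + 1)) by (intros k; apply Rdiv_lt_0_compat; [lra|pose proof (pos_INR k); lra]).
  assert (Hk : forall k : nat, exists p, is_closest (K k) c p).
  { intros k. apply closest_ex.
    - apply level_convex; auto.
    - apply level_closed; auto.
    - destruct (Hm2 _ (Hpos k)) as [v [[z [Hz ->]] Hv]]. exists z; split; auto; lra. }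
  set (ps := fun k => proj1_sig (constructive_indefinite_description _ (Hk k))).
  assert (Hps : forall k, is_closest (K k) c (ps k)).
  { intros k. exact (proj2_sig (constructive_indefinite_description _ (Hk k))). }
  assert (Hsub : forall k l, (k <= l)%nat -> forall z, K l z -> K k z).
  { intros k l Hkl z [Hz1 Hz2]. split; auto.
    assert (INR k <= INR l) by (apply le_INR; auto). pose proof (pos_INR k).
    assert (1 / (INR l + 1) <= 1 / (INR k + 1)); [|lra].
    unfold Rdiv; rewrite !Rmult_1_l. apply Rinv_le_contravar; lra. }
  set (a := fun k => nsq (vsub c (ps k))).
  assert (Hmon : forall k l, (k <= l)%nat -> a k + nsq (vsub (ps k) (ps l)) <= a l).
  { intros k l Hkl. unfold a. apply (proj_ineq (K k)).
    - apply level_convex; auto.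
    - apply Hps.
    - apply (Hsub k l Hkl). apply Hps. }
  assert (Hbd : forall k, a k <= Rad * Rad).
  { intros k. unfold a. rewrite <- dist_sq. destruct (Hps k) as [[Hb _] _]. unfold cball in Hb.
    rewrite dist_sym in Hb. pose proof (dist_nonneg c (ps k)). nra. }
  destruct (sup_ex (fun v => exists k, v = a k) (Rad * Rad)) as [L [HL1 HL2]].
  { exists (a 0%nat); eauto. }
  { intros v [k ->]; auto. }
  destruct (completeness_vec ps (fun k => L - a k)) as [p Hp].
  - intros k. pose proof (HL1 (a k) (ex_intro _ k eq_refl)). lra.
  - intros eps He. destruct (HL2 eps He) as [v [[k0 ->] Hv]]. exists k0. intros k Hk0.
    pose proof (Hmon k0 k Hk0). pose proof (nsq_nonneg (vsub (ps k0) (ps k))). lra.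
  - intros k l Hkl. pose proof (Hmon k l Hkl). pose proof (HL1 (a l) (ex_intro _ l eq_refl)). lra.
  - assert (Bp : cball c Rad p).
    { unfold cball. apply lim_le. intros eta He. destruct (Hp eta He) as [N HN].
      specialize (HN N (le_n N)). destruct (Hps N) as [[Hb _] _]. unfold cball in Hb.
      pose proof (dist_triangle p (ps N) c). rewrite dist_sym in HN. lra. }
    assert (Fp : F p <= m).
    { apply lim_le; intros eta He. destruct (Hp (eta / 2) ltac:(lra)) as [N1 HN1].
      destruct (eps_seq (eta / 2) ltac:(lra)) as [N2 HN2].
      set (k := max N1 N2). specialize (HN1 k ltac:(lia)). specialize (HN2 k ltac:(lia)).
      destruct (Hps k) as [[_ Hf] _]. pose proof (HL p (ps k)). rewrite dist_sym in HN1. lra. }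
    exists (F p). split; [exists p; split; auto|].
    intros z Hz. pose proof (Hm1 (F z) (ex_intro _ z (conj Hz eq_refl))). lra. Qed.

Lemma min_uniq {n} (E : vec n -> Prop) (F : vec n -> R) d1 d2 :
  is_min_val E F d1 -> is_min_val E F d2 -> d1 = d2.
Proof. intros [[x1 [E1 F1]] H1] [[x2 [E2 F2]] H2]. specialize (H1 x2 E2). specialize (H2 x1 E1). lra. Qed.

Lemma descent (Q : nat -> Prop) k : Q (S k) ->
  exists t0, (1 <= t0 <= S k)%nat /\ Q t0 /\ (t0 = 1%nat \/ ~ Q (t0 - 1)%nat).
Proof. induction k; intros H.
  - exists 1%nat; auto.
  - destruct (classic (Q (S k))) as [Hq|Hq].
    + destruct (IHk Hq) as [t0 [? ?]]. exists t0; split; [lia|auto].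
    + exists (S (S k)); split; [lia|split; auto]. Qed.

Theorem proposition1 (n : nat) (c : vec n) (Rad rho : R) (ystar : vec n)
  (Ys : vec n -> Prop) (y g : nat -> vec n) (b : nat -> R) (S : nat) :
  0 < Rad -> 0 < rho ->
  convex Ys ->
  (forall z, Ys z -> cball c Rad z) ->
  (forall z, cball ystar rho z -> Ys z) ->
  BL_run c Rad Ys y g b S ->
  (forall s, (1 <= s <= S)%nat ->
     (exists d, is_min_val (cball c Rad) (fmax g b s) d /\ d <= - rho) /\
     (forall d, is_min_val (cball c Rad) (fmax g b s) d ->
        (exists p, is_closest (level_set c Rad (fmax g b s) d) (y s) p) /\
        (forall p q, is_closest (level_set c Rad (fmax g b s) d) (y s) p ->
                     is_closest (level_set c Rad (fmax g b s) d) (y s) q -> p = q)))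
  /\ INR S <= 32 * Rad ^ 2 / rho ^ 2.
Proof.
  intros HR Hrho Hcv HYs Hball [Hy1 [Hsep Hstep]].
  assert (Hlip : forall s, (1 <= s <= S)%nat -> forall x z, fmax g b s x <= fmax g b s z + dist x z).
  { intros s Hs x z. apply fmax_lip; [lia|]. intros r Hr. apply (Hsep r ltac:(lia)). }
  assert (Hcvx : forall s x z t, 0 <= t <= 1 -> fmax g b s (cc t x z) <= t * fmax g b s x + (1 - t) * fmax g b s z)
    by (intros; apply fmax_convex; auto).
  assert (Hys : cball c Rad ystar) by (apply HYs, Hball; unfold cball; rewrite dist_self; lra).
  assert (Hstar : forall s, (1 <= s <= S)%nat -> fmax g b s ystar <= - rho).
  { intros s Hs. apply fmax_le; [lia|]. intros r Hr. destruct (Hsep r ltac:(lia)) as [Hg [_ Hneg]].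
    apply aff_ball; auto. }
  assert (Hmin : forall s, (1 <= s <= S)%nat -> exists d, is_min_val (cball c Rad) (fmax g b s) d).
  { intros s Hs. apply min_ex; auto. }
  assert (Hminle : forall s d, (1 <= s <= S)%nat -> is_min_val (cball c Rad) (fmax g b s) d -> d <= - rho).
  { intros s d Hs [_ Hd]. specialize (Hd ystar Hys). specialize (Hstar s Hs). lra. }
  assert (Hlc : forall s d, convex (level_set c Rad (fmax g b s) d)).
  { intros s d. apply level_convex; auto. }
  split.
  { intros s Hs. split.
    - destruct (Hmin s Hs) as [d Hd]. exists d; split; auto. apply (Hminle s); auto.
    - intros d Hd. split.
      + apply closest_ex; auto.
        * apply level_closed; auto.
        * pose proof (Hminle s d Hs Hd). destruct Hd as [[y0 [Hy0 Fy0]] _].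
          exists y0. split; auto. lra.
      + intros p q Hp Hq. apply (closest_unique (level_set c Rad (fmax g b s) d) (y s)); auto. }
  set (D := fun t => epsilon (inhabits 0) (fun d => is_min_val (cball c Rad) (fmax g b t) d)).
  assert (HD : forall t, (1 <= t <= S)%nat -> is_min_val (cball c Rad) (fmax g b t) (D t)).
  { intros t Ht. apply epsilon_spec. apply Hmin; auto. }
  assert (HDup : forall t, (1 <= t <= S)%nat -> D t <= - rho) by (intros; apply (Hminle t); auto).
  assert (HDlow : forall t, (1 <= t <= S)%nat -> - Rad <= D t).
  { intros t Ht. destruct (HD t Ht) as [[x [Hx Fx]] _].
    pose proof (aff_le_fmax g b 1 t x ltac:(lia)).
    destruct (Hsep 1%nat ltac:(lia)) as [Hg1 [Hpos _]]. rewrite Hy1 in Hpos.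
    pose proof (aff_lip (g 1%nat) c x (b 1%nat) Hg1). rewrite dist_sym in H0. unfold cball in Hx. lra. }
  assert (HDmon : forall t t', (1 <= t <= t')%nat -> (t' <= S)%nat -> D t <= D t').
  { intros t t' Ht Ht'. destruct (HD t' ltac:(lia)) as [[x [Hx Fx]] _].
    destruct (HD t ltac:(lia)) as [_ Hm]. specialize (Hm x Hx).
    pose proof (fmax_mono g b t t' x ltac:(lia)). lra. }
  assert (HDcl : forall t, (1 <= t)%nat -> (Datatypes.S t <= S)%nat ->
     is_closest (level_set c Rad (fmax g b t) (D t)) (y t) (y (Datatypes.S t))).
  { intros t Ht Ht'. pose proof (Hstep (Datatypes.S t) ltac:(lia)) as Hb.
    replace (Datatypes.S t - 1)%nat with t in Hb by lia. destruct Hb as [d [Hd Hcl]].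
    rewrite <- (min_uniq _ _ _ _ Hd (HD t ltac:(lia))). exact Hcl. }
  assert (Hyin : forall t, (1 <= t <= S)%nat -> cball c Rad (y t)).
  { intros t Ht. destruct t as [|t]; [lia|]. destruct t as [|t].
    - rewrite Hy1. unfold cball; rewrite dist_self; lra.
    - destruct (HDcl (Datatypes.S t) ltac:(lia) ltac:(lia)) as [[Hb _] _]. exact Hb. }
  assert (Hstepsz : forall t, (1 <= t)%nat -> (Datatypes.S t <= S)%nat ->
     D t * D t / 4 <= nsq (vsub (y t) (y (Datatypes.S t)))).
  { intros t Ht Ht'. destruct (Hsep t ltac:(lia)) as [Hg [Hpos _]].
    destruct (HDcl t Ht Ht') as [[_ Hlev] _].
    pose proof (aff_le_fmax g b t t (y (Datatypes.S t)) ltac:(lia)).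
    pose proof (aff_lip (g t) (y t) (y (Datatypes.S t)) (b t) Hg).
    pose proof (HDup t ltac:(lia)). rewrite <- dist_sq.
    pose proof (dist_nonneg (y t) (y (Datatypes.S t))). nra. }
  assert (Hdiam : forall u v, cball c Rad u -> cball c Rad v -> nsq (vsub u v) <= 4 * (Rad * Rad)).
  { intros u v Hu Hv. unfold cball in *. rewrite <- dist_sq. pose proof (dist_triangle u c v).
    rewrite (dist_sym c v) in H. pose proof (dist_nonneg u v). nra. }
  assert (Htel : forall T x t0, (1 <= t0 <= T)%nat -> (T <= S)%nat -> cball c Rad x -> fmax g b T x = D T ->
     D T <= D t0 / 2 -> forall j, (t0 + j <= T)%nat ->
     INR j * (D T * D T) / 4 + nsq (vsub (y (t0 + j)%nat) x) <= nsq (vsub (y t0) x)).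
  { intros T x t0 Ht0 HT Hx Fx HQ. induction j as [|j IH]; intros Hj.
    - replace (t0 + 0)%nat with t0 by lia. simpl INR. lra.
    - specialize (IH ltac:(lia)). set (t := (t0 + j)%nat) in *.
      replace (t0 + Datatypes.S j)%nat with (Datatypes.S t) by (unfold t; lia).
      assert (Hxl : level_set c Rad (fmax g b t) (D t) x).
      { split; auto. pose proof (fmax_mono g b t T x ltac:(unfold t; lia)).
        pose proof (HDmon t0 t ltac:(unfold t; lia) ltac:(unfold t; lia)). lra. }
      pose proof (proj_ineq _ _ _ _ (Hlc t (D t)) (HDcl t ltac:(unfold t; lia) ltac:(unfold t; lia)) Hxl).
      pose proof (Hstepsz t ltac:(unfold t; lia) ltac:(unfold t; lia)).
      pose proof (HDmon t T ltac:(unfold t; lia) HT). pose proof (HDup T ltac:(lia)).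
      assert (D T * D T <= D t * D t) by nra.
      rewrite S_INR. nra. }
  assert (Hmain : forall N T, (T <= N)%nat -> (1 <= T <= S)%nat -> INR T * (D T * D T) <= 32 * (Rad * Rad)).
  { induction N as [|N IH]; intros T HTN HT; [lia|].
    destruct (HD T HT) as [[x [Hx Fx]] _].
    destruct (descent (fun t => D T <= D t / 2) (T - 1)) as [t0 [Ht0 [HQ Hcase]]].
    { replace (Datatypes.S (T - 1)) with T by lia. pose proof (HDup T HT). lra. }
    replace (Datatypes.S (T - 1)) with T in Ht0 by lia.
    pose proof (Htel T x t0 Ht0 (proj2 HT) Hx Fx HQ (T - t0)%nat ltac:(lia)) as Ht.
    replace (t0 + (T - t0))%nat with T in Ht by lia.
    pose proof (Hdiam _ _ (Hyin t0 ltac:(lia)) Hx).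
    pose proof (nsq_nonneg (vsub (y T) x)).
    pose proof (HDup T HT). pose proof (HDlow T HT).
    assert (HDT : D T * D T <= Rad * Rad) by nra.
    assert (Hm : INR (T - t0) * (D T * D T) <= 16 * (Rad * Rad)) by lra.
    rewrite minus_INR in Hm by lia.
    destruct (PeanoNat.Nat.eq_dec t0 1) as [-> | Hne].
    - simpl INR in Hm. nra.
    - destruct Hcase as [ | Hn]; [lia|].
      assert (Hlt : D (t0 - 1)%nat < 2 * D T) by lra.
      assert (Hi : INR (t0 - 1) * (D (t0 - 1)%nat * D (t0 - 1)%nat) <= 32 * (Rad * Rad)).
      { apply IH; lia. }
      rewrite minus_INR in Hi by lia. simpl INR in Hi.
      assert (4 * (D T * D T) <= D (t0 - 1)%nat * D (t0 - 1)%nat) by nra.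
      assert (0 <= INR t0 - 1) by (assert (1 <= INR t0) by (apply (le_INR 1); lia); lra).
      assert ((INR t0 - 1) * (4 * (D T * D T)) <= 32 * (Rad * Rad)) by nra.
      nra. }
  destruct S as [|S'].
  - simpl INR. apply Rmult_le_pos; [nra|]. apply Rlt_le, Rinv_0_lt_compat. nra.
  - pose proof (Hmain (Datatypes.S S') (Datatypes.S S') (le_n _) ltac:(lia)).
    pose proof (HDup (Datatypes.S S') ltac:(lia)).
    assert (rho * rho <= D (Datatypes.S S') * D (Datatypes.S S')) by nra.
    pose proof (pos_INR (Datatypes.S S')).
    assert (INR (Datatypes.S S') * (rho * rho) <= 32 * (Rad * Rad)) by nra.
    apply Rmult_le_reg_r with (rho ^ 2); [nra|].
    replace (32 * Rad ^ 2 / rho ^ 2 * rho ^ 2) with (32 * (Rad * Rad)) by (field; lra).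
    replace (rho ^ 2) with (rho * rho) by ring. lra.
Qed.
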